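(* Let $n\ge2$ and $\mathsf u\in\mathcal S_n$. Then $\mathsf r^{\mathsf u}\in\textsc{fact}(\lambda_n)$; that is, $\mathsf r^{\mathsf u}$ consists of $2n-2$ reflections whose product (in order) equals $\lambda_n$.
   Context: $\widetilde S_n$ is the group, under composition $(vw)(k)=v(w(k))$, of bijections $w:\mathbb Z\to\mathbb Z$ with $w(i+n)=w(i)+n$ and $\sum_{i=1}^n w(i)=\binom{n+1}2$. For $i\not\equiv j\pmod n$, $(\!(i,j)\!)$ swaps $i+kn$ and $j+kn$ for all $k\in\mathbb Z$; $s_i=(\!(i,i+1)\!)$ for $i\in\{0,\dots,n-1\}$. $\lambda_n\in\widetilde S_n$ is given by $\lambda_n(k)=k+n$ for $k\not\equiv0\pmod n$ and $\lambda_n(k)=k-n(n-1)$ for $k\equiv0\pmod n$; its reflection length is $2n-2$, and $\textsc{fact}(\lambda_n)$ is the set of sequences of $2n-2$ reflections whose product is $\lambda_n$. $\bm\lambda_n$ is the word $[s_0,\dots,s_{n-1}]$ repeated $n-1$ times, with $j$-th letter $\sigma_j=s_{(j-1)\bmod n}$ (index in $\{0,\dots,n-1\}$). A subword is $\mathsf u=[u_1,\dots,u_{n(n-1)}]$ with $u_j\in\{\sigma_j,e\}$; indices with $u_j=e$ are skips. Write $u_{(j)}=u_1\cdots u_j$ ($u_{(0)}=e$). $\mathcal S_n$ is the set of subwords with exactly $2n-2$ skips and $u_1\cdots u_{n(n-1)}=e$. $\textsc{inv}(\mathsf u)=[t_1,\dots,t_{n(n-1)}]$ with $t_j=u_{(j-1)}\sigma_ju_{(j-1)}^{-1}$,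 and $\mathsf r^{\mathsf u}$ is the subsequence of $\textsc{inv}(\mathsf u)$ consisting of the $t_j$ with $j$ a skip, in increasing order of $j$. *)

(* Defs.v *)
(* Elements of the affine symmetric group are represented as
   functions int -> int, composed as (v w)(k) = v (w k). *)
From mathcomp Require Import all_boot all_order all_algebra.
Set Implicit Arguments. Unset Strict Implicit. Unset Printing Implicit Defensive.
Import Order.TTheory GRing.Theory Num.Theory.
Local Open Scope ring_scope.

Definition comp (v w : int -> int) : int -> int := fun k => v (w k).
Definition idp : int -> int := fun k => k.

(* the reflection ((i,j)) of tilde S_n: swaps i + kn and j + kn for all k
   (meaningful when i and j are not congruent mod n) *)
Definition arefl (n : nat) (i j : int) : int -> int := fun k =>
  if ((k - i) %% n%:Z)%Z == 0 then k - i + j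
  else if ((k - j) %% n%:Z)%Z == 0 then k - j + i
  else k.

Definition is_reflection (n : nat) (f : int -> int) : Prop :=
  exists i j : int, ((i - j) %% n%:Z)%Z != 0 /\ forall k, f k = arefl n i j k.

Definition sref (n : nat) (i : nat) : int -> int := arefl n i%:Z (i.+1)%:Z.

Definition lambda_n (n : nat) : int -> int := fun k =>
  if (k %% n%:Z)%Z == 0 then k - (n * (n - 1))%:Z else k + n%:Z.

Definition prodseq (rs : seq (int -> int)) : int -> int := foldr comp idp rs.

Definition in_fact_lambda (n : nat) (rs : seq (int -> int)) : Prop :=
  size rs = (2 * n - 2)%N /\
  (forall p, (p < size rs)%N -> is_reflection n (nth idp rs p)) /\
  (forall k, prodseq rs k = lambda_n n k).

(* The word bold-lambda_n has length n(n-1); its letter at 0-based position p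
   (i.e. letter j = p+1) is sigma_j = s_{p mod n}. *)
Definition wlen (n : nat) : nat := (n * (n - 1))%N.
Definition sigma (n : nat) (p : nat) : int -> int := sref n (p %% n).

(* A subword is encoded by a bit sequence b of length n(n-1): b_p = true iff
   position p (letter j = p+1) is a skip, i.e. u_j = e; otherwise u_j = sigma_j. *)
Definition uletter (n : nat) (b : seq bool) (p : nat) : int -> int :=
  if nth false b p then idp else sigma n p.

Definition upref (n : nat) (b : seq bool) (m : nat) : int -> int :=
  prodseq [seq uletter n b p | p <- iota 0 m].

(* (u_(m))^{-1} = u_m^{-1} ... u_1^{-1} = u_m ... u_1, each u_j being an
   involution (identity or a simple reflection) *)
Definition upref_inv (n : nat) (b : seq bool) (m : nat) : int -> int :=
  prodseq [seq uletter n b p | p <- rev (iota 0 m)].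

(* t_j = u_(j-1) sigma_j u_(j-1)^{-1}, at 0-based position p = j-1 *)
Definition tinv (n : nat) (b : seq bool) (p : nat) : int -> int :=
  comp (upref n b p) (comp (sigma n p) (upref_inv n b p)).

Definition in_Sn (n : nat) (b : seq bool) : Prop :=
  size b = wlen n /\ count id b = (2 * n - 2)%N /\
  (forall k, upref n b (wlen n) k = k).

Definition r_u (n : nat) (b : seq bool) : seq (int -> int) :=
  [seq tinv n b p | p <- iota 0 (wlen n) & nth false b p].

(* Main.v *)
Require Import Defs.
From mathcomp Require Import all_boot all_order all_algebra.
From mathcomp Require Import zify.
From Stdlib Require Import FunctionalExtensionality.
Import Order.TTheory GRing.Theory Num.Theory.
Local Open Scope ring_scope.

Lemma modz0P (n : nat) (x : int) :
  ((x %% n%:Z)%Z == 0) <-> exists t : int, x = t * n%:Z.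
Proof.
split.
- move/eqP=> H; exists (x %/ n%:Z)%Z.
  by rewrite {1}(divz_eq x n%:Z) H addr0.
- by case=> t ->; rewrite modzMl.
Qed.

Lemma modz0_small (n : nat) (x q d : int) : (0 < n)%N ->
  x = q * n%:Z + d -> - n%:Z < d < n%:Z -> ((x %% n%:Z)%Z == 0) = (d == 0).
Proof.
move=> n0 -> /andP[h1 h2]; rewrite modzMDl.
case: (ltrP d 0) => hd.
- rewrite {1}(_ : d = (-1) * n%:Z + (d + n%:Z)); last by lia.
  rewrite modzMDl modz_small; last by lia.
  by apply/idP/idP => /eqP H; apply/eqP; lia.
- by rewrite modz_small //; lia.
Qed.

Lemma modz0R (n : nat) (x : int) :
  reflect (exists t : int, x = t * n%:Z) ((x %% n%:Z)%Z == 0).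
Proof. by apply: (iffP idP) => /modz0P. Qed.

Lemma modz_qr (n : nat) (q r : int) : (0 < n)%N -> 0 <= r < n%:Z ->
  ((q * n%:Z + r) %% n%:Z)%Z = r.
Proof. by move=> n0 hr; rewrite modzMDl modz_small. Qed.

Definition per (n : nat) (w : int -> int) :=
  forall k q, w (k + q * n%:Z) = w k + q * n%:Z.

Lemma modz_shift (n : nat) (x q : int) :
  ((x + q * n%:Z) %% n%:Z)%Z = (x %% n%:Z)%Z.
Proof. by rewrite addrC modzMDl. Qed.

Lemma per_arefl n i j : per n (arefl n i j).
Proof.
move=> k q; rewrite /arefl.
rewrite (_ : k + q * n%:Z - i = (k - i) + q * n%:Z); last by lia.
rewrite (_ : k + q * n%:Z - j = (k - j) + q * n%:Z); last by lia.
rewrite !modz_shift.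
by case: ifP => _; [|case: ifP => _]; lia.
Qed.

Lemma per_idp n : per n idp.
Proof. by []. Qed.

Lemma per_comp n v w : per n v -> per n w -> per n (comp v w).
Proof. by move=> hv hw k q; rewrite /comp hw hv. Qed.

Lemma arefl_invol n i j k : ~~ ((i - j) %% n%:Z == 0)%Z ->
  arefl n i j (arefl n i j k) = k.
Proof.
move=> hij; rewrite /arefl.
have nij : ~ exists t : int, i - j = t * n%:Z by move/modz0P; apply/negP.
case: (modz0R n (k - i)) => H1.
- case: H1 => s Hs.
  case: (modz0R n (k - i + j - i)) => H2.
  + case: H2 => t Ht; exfalso; apply: nij; exists (s - t); lia.
  + case: (modz0R n (k - i + j - j)) => H3; first lia.
    exfalso; apply: H3; exists s; lia.
- case: (modz0R n (k - j)) => H2.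
  + case: H2 => s Hs.
    case: (modz0R n (k - j + i - i)) => H3; first lia.
    exfalso; apply: H3; exists s; lia.
  + case: (modz0R n (k - i)) => H3; first by exfalso; apply: H1.
    case: (modz0R n (k - j)) => H4; first by exfalso; apply: H2.
    by [].
Qed.

Lemma conj_refl n (w w' : int -> int) i j :
  per n w -> (forall k, w (w' k) = k) -> (forall k, w' (w k) = k) ->
  ~~ ((i - j) %% n%:Z == 0)%Z ->
  (forall k, comp w (comp (arefl n i j) w') k = arefl n (w i) (w j) k) /\
  ~~ ((w i - w j) %% n%:Z == 0)%Z.
Proof.
move=> hp hww' hw'w hij.
have nij : ~ exists t : int, i - j = t * n%:Z by move/modz0P; apply/negP.
have key : forall a k, (exists t, w' k - a = t * n%:Z) <-> (exists t, k - w a = t * n%:Z).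
  move=> a k; split.
  - case=> t Ht; exists t.
    have -> : k = w (a + t * n%:Z) by rewrite -(hww' k); congr w; lia.
    rewrite hp; lia.
  - case=> t Ht; exists t.
    have -> : k = w (a + t * n%:Z) by rewrite hp; lia.
    rewrite hw'w; lia.
split.
- move=> k; rewrite /comp /arefl.
  case: (modz0R n (w' k - i)) => H1.
  + have [t Ht] := H1.
    case: (modz0R n (k - w i)) => H2; last by exfalso; apply: H2; apply/key.
    rewrite (_ : w' k - i + j = j + t * n%:Z); last by lia.
    have : k = w (i + t * n%:Z) by rewrite -(hww' k); congr w; lia.
    rewrite !hp; lia.
  + case: (modz0R n (k - w i)) => H2; first by exfalso; apply: H1; apply/key.
    case: (modz0R n (w' k - j)) => H3.
    * have [t Ht] := H3.
      case: (modz0R n (k - w j)) => H4; last by exfalso; apply: H4; apply/key.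
      rewrite (_ : w' k - j + i = i + t * n%:Z); last by lia.
      have : k = w (j + t * n%:Z) by rewrite -(hww' k); congr w; lia.
      rewrite !hp; lia.
    * case: (modz0R n (k - w j)) => H4; first by exfalso; apply: H3; apply/key.
      by rewrite hww'.
- apply/negP => /modz0P [t Ht]; apply: nij; exists t.
  have : w i = w (j + t * n%:Z) by rewrite hp; lia.
  move/(congr1 w'); rewrite !hw'w; lia.
Qed.

Lemma prodseq_rcons s x : prodseq (rcons s x) = comp (prodseq s) x.
Proof. by elim: s => //= a s ->. Qed.

Lemma iotaS0 m : iota 0 m.+1 = rcons (iota 0 m) m.
Proof. by rewrite -cats1 -addn1 iotaD. Qed.

Lemma sref_ok n p : (2 <= n)%N -> ~~ ((p%:Z - (p.+1)%:Z) %% n%:Z == 0)%Z.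
Proof.
move=> n2; apply/negP => /modz0P [t Ht].
have h : t * n%:Z = -1 by lia.
have [ht|ht] : (t <= -1) \/ (0 <= t) by lia.
- have : t * n%:Z <= -1 * n%:Z by rewrite ler_pM2r //; lia.
  lia.
- have : 0 <= t * n%:Z by apply: mulr_ge0.
  lia.
Qed.

Lemma per_uletter n b p : per n (uletter n b p).
Proof. rewrite /uletter; case: ifP => _; [exact: per_idp | exact: per_arefl]. Qed.

Lemma uletter_invol n b p k : (2 <= n)%N -> uletter n b p (uletter n b p k) = k.
Proof.
move=> n2; rewrite /uletter; case: ifP => _ //.
by rewrite /sigma /sref arefl_invol // sref_ok.
Qed.

Lemma upref_S n b m : upref n b m.+1 = comp (upref n b m) (uletter n b m).
Proof. by rewrite /upref iotaS0 map_rcons prodseq_rcons. Qed.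

Lemma upref_inv_S n b m : upref_inv n b m.+1 = comp (uletter n b m) (upref_inv n b m).
Proof. by rewrite /upref_inv iotaS0 rev_rcons. Qed.

Lemma per_upref n b m : per n (upref n b m).
Proof.
elim: m => [|m IH]; first exact: per_idp.
by rewrite upref_S; apply: per_comp => //; apply: per_uletter.
Qed.

Lemma upref_inv_l n b m k : (2 <= n)%N -> upref_inv n b m (upref n b m k) = k.
Proof.
move=> n2; elim: m k => [|m IH] k //.
by rewrite upref_S upref_inv_S /comp IH uletter_invol.
Qed.

Lemma upref_inv_r n b m k : (2 <= n)%N -> upref n b m (upref_inv n b m k) = k.
Proof.
move=> n2; elim: m k => [|m IH] k //.
by rewrite upref_S upref_inv_S /comp uletter_invol.
Qed.


Lemma tinv_refl n b p : (2 <= n)%N -> is_reflection n (tinv n b p).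
Proof.
move=> n2.
have [H1 H2] := @conj_refl n (upref n b p) (upref_inv n b p) (p %% n)%N%:Z ((p %% n)%N.+1)%:Z
  (per_upref n b p) (fun k => upref_inv_r n b p k n2) (fun k => upref_inv_l n b p k n2) (@sref_ok n _ n2).
by exists (upref n b p (p %% n)%N%:Z), (upref n b p ((p %% n)%N.+1)%:Z); split.
Qed.

Lemma prod_identity n b m k : (2 <= n)%N ->
  prodseq [seq sigma n p | p <- iota 0 m] k =
  prodseq [seq tinv n b p | p <- iota 0 m & nth false b p] (upref n b m k).
Proof.
move=> n2; elim: m k => [|m IH] k //.
rewrite iotaS0 filter_rcons !map_rcons prodseq_rcons /comp IH upref_S /comp /uletter.
case: ifP => hb; rewrite ?map_rcons ?prodseq_rcons /comp //.
set S := prodseq _; rewrite /comp /idp /= /tinv. unfold Defs.comp. by rewrite upref_inv_l.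
Qed.

Ltac fin := repeat match goal with |- context [if ?b then _ else _] => let H := fresh in destruct b eqn:H end; lia.
Ltac mz q d := rewrite (@modz0_small _ _ (q : int) (d : int)); [ | by lia | by lia | by lia].

Definition Pm n m := prodseq [seq sigma n p | p <- iota m (n - m)].

Lemma P_formula n : (2 <= n)%N -> forall d m, (n - m = d)%N -> (1 <= m <= n)%N ->
  forall q r : int, 0 <= r < n%:Z ->
  Pm n m (q * n%:Z + r) =
  if r == 0 then q * n%:Z + r - n%:Z + m%:Z
  else if m%:Z <= r then q * n%:Z + r + 1 else q * n%:Z + r.
Proof.
move=> n2; elim=> [|d IH] m hd hm q r hr.
- have -> : m = n by lia.
  rewrite /Pm subnn /= /idp; fin.
- have mn : (m < n)%N by lia.
  rewrite /Pm (_ : (n - m = (n - m.+1).+1)%N); last by lia.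
  rewrite /= -/(Pm n m.+1); unfold Defs.comp.
  rewrite /sigma modn_small // /sref /arefl.
  have [h|[h|[h|h]]] : r = 0 \/ (0 < r < m%:Z) \/ r = m%:Z \/ m%:Z < r by lia.
  + have -> : Pm n m.+1 (q * n%:Z + r) = q * n%:Z + r - n%:Z + (m.+1)%:Z.
      rewrite (IH m.+1); [fin | lia..].
    mz (q - 1) (1:int); mz (q - 1) (0:int); fin.
  + have -> : Pm n m.+1 (q * n%:Z + r) = q * n%:Z + r.
      rewrite (IH m.+1); [fin | lia..].
    mz q (r - m%:Z); mz q (r - m%:Z - 1); fin.
  + have -> : Pm n m.+1 (q * n%:Z + r) = q * n%:Z + r.
      rewrite (IH m.+1); [fin | lia..].
    mz q (0:int); mz q (-1:int); fin.
  + have -> : Pm n m.+1 (q * n%:Z + r) = q * n%:Z + r + 1.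
      rewrite (IH m.+1); [fin | lia..].
    mz q (r + 1 - m%:Z); mz q (r - m%:Z); fin.
Qed.

Lemma c_formula n : (2 <= n)%N -> forall q r : int, 0 <= r < n%:Z ->
  Pm n 0 (q * n%:Z + r) =
  if r == 0 then q * n%:Z + r - n%:Z
  else if r == n%:Z - 1 then q * n%:Z + r + 2 else q * n%:Z + r + 1.
Proof.
move=> n2 q r hr.
rewrite /Pm (_ : (n - 0 = (n - 1).+1)%N); last by lia.
rewrite /= -/(Pm n 1); unfold Defs.comp.
rewrite /sigma mod0n /sref /arefl.
have [h|[h|h]] : r = 0 \/ (0 < r < n%:Z - 1) \/ r = n%:Z - 1 by lia.
- have -> : Pm n 1 (q * n%:Z + r) = q * n%:Z + r - n%:Z + 1.
    rewrite (@P_formula n n2 (n - 1)%N 1%N); [fin | lia..].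
  mz (q - 1) (1:int); mz (q - 1) (0:int); fin.
- have -> : Pm n 1 (q * n%:Z + r) = q * n%:Z + r + 1.
    rewrite (@P_formula n n2 (n - 1)%N 1%N); [fin | lia..].
  mz q (r + 1); mz q r; fin.
- have -> : Pm n 1 (q * n%:Z + r) = q * n%:Z + r + 1.
    rewrite (@P_formula n n2 (n - 1)%N 1%N); [fin | lia..].
  mz (q + 1) (0:int); mz (q + 1) (-1:int); fin.
Qed.

Definition cp n j := iter j (fun f => comp f (Pm n 0)) idp.

Lemma cp_formula n : (2 <= n)%N -> forall j, (j <= n - 1)%N ->
  forall q r : int, 0 <= r < n%:Z ->
  cp n j (q * n%:Z + r) =
  if r == 0 then q * n%:Z + r - j%:Z * n%:Z
  else if r + j%:Z <= n%:Z - 1 then q * n%:Z + r + j%:Z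
  else q * n%:Z + r + j%:Z + 1.
Proof.
move=> n2; elim=> [|j IH] hj q r hr.
- rewrite /cp /= /idp; fin.
- rewrite /cp iterS /= -/(cp n j); unfold Defs.comp.
  have [h|[h|h]] : r = 0 \/ (0 < r < n%:Z - 1) \/ r = n%:Z - 1 by lia.
  + have -> : Pm n 0 (q * n%:Z + r) = (q - 1) * n%:Z + 0.
      rewrite c_formula //; fin.
    rewrite IH; [fin | lia..].
  + have -> : Pm n 0 (q * n%:Z + r) = q * n%:Z + (r + 1).
      rewrite c_formula //; fin.
    rewrite IH; [fin | lia..].
  + have -> : Pm n 0 (q * n%:Z + r) = (q + 1) * n%:Z + 1.
      rewrite c_formula //; fin.
    rewrite IH; [fin | lia..].
Qed.

Lemma prodseq_cat s t : prodseq (s ++ t) = comp (prodseq s) (prodseq t).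
Proof. by elim: s => //= a s ->. Qed.

Lemma W_cp n j : prodseq [seq sigma n p | p <- iota 0 (j * n)] = cp n j.
Proof.
elim: j => [|j IH] //.
rewrite mulSnr iotaD map_cat prodseq_cat IH /cp iterS /= -/(cp n j).
congr comp.
rewrite /Pm subn0 add0n -[(j * n)%N]addn0 iotaDl -map_comp.
congr prodseq; apply: eq_map => p /=.
by rewrite /sigma modnMDl.
Qed.

Theorem corollary5p10 (n : nat) (b : seq bool) :
  (2 <= n)%N -> in_Sn n b -> in_fact_lambda n (r_u n b).
Proof.
move=> n2 [Hs [Hc He]].
split; [|split].
- rewrite /r_u size_map size_filter -Hc -Hs.
  by rewrite -[in RHS](mkseq_nth false b) /mkseq count_map.
- move=> p hp; rewrite /r_u size_map in hp; rewrite /r_u (nth_map 0%N) //.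
  exact: tinv_refl.
- move=> k.
  have := @prod_identity n b (wlen n) k n2.
  rewrite He /r_u => <-.
  rewrite /wlen mulnC W_cp.
  have hn0 : n%:Z != 0 by apply/eqP; lia.
  have hr0 := modz_ge0 k hn0.
  have hr1 : (k %% n%:Z < n%:Z)%Z by apply: ltz_pmod; lia.
  have E := divz_eq k n%:Z.
  rewrite {1}E cp_formula //; last by lia.
  rewrite /lambda_n.
  move: E hr0 hr1.
  generalize (k %/ n%:Z)%Z (k %% n%:Z)%Z => q r E hr0 hr1.
  fin.
Qed.
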